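(* Under the setting described in the context, the sequence $\{u_n\}_{n\in\mathbb{N}}$ is bounded in $L^\infty((0,T)\times(0,L))$ for every $T>0$.
   Context: $L>0$. $\Phi\in C(\mathbb{R})\cap C^1(\mathbb{R}\setminus\{\pm1\})$ is constant on $(-\infty,-1]$ and on $[1,\infty)$, convex on $[-1,1]$, decreasing on $[-1,0]$, increasing on $[0,1]$; $u_0\in H^1(0,L)$, $u_1\in L^2(0,L)$. Sequences $\{u_{0,n}\},\{u_{1,n}\}\subset C^\infty([0,L])$, $\{\Phi_n\}\subset C^\infty(\mathbb{R})$ satisfy: $u_{0,n}\to u_0$ in $H^1(0,L)$, $u_{1,n}\to u_1$ in $L^2(0,L)$, $\Phi_n\to\Phi$ uniformly on $\mathbb{R}$; $\Phi_n'\to\Phi'$ pointwise on $\mathbb{R}$ and uniformly on $\mathbb{R}\setminus((-1-\varepsilon,-1+\varepsilon)\cup(1-\varepsilon,1+\varepsilon))$ for every $\varepsilon>0$; $\Phi_n'(u)=0$ whenever $|u|\ge1+\varepsilon$ (any $\varepsilon>0$, all $n$); there is $C>0$ independent of $n$ with $\|u_{0,n}\|_{H^1}\le C$, $\|u_{1,n}\|_{L^2}\le C$, $0\le\Phi_n,\Phi_n'\le C$; and $u_{0,n}'(0)=u_{0,n}'(L)=u_{1,n}(0)=u_{1,n}(L)=0$. For each $n$, $u_n$ is the (global) classical solution of $\partial_{tt}^2 u_n=\partial_{xx}^2 u_n-\Phi_n'(u_n)$ for $t>0$, $0<x<L$, with $\partial_x u_n(t,0)=\partial_x u_n(t,L)=0$,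 $u_n(0,\cdot)=u_{0,n}$, $\partial_t u_n(0,\cdot)=u_{1,n}$. *)

(* Defs.v *)
From HB Require Import structures.
From mathcomp Require Import all_boot all_order all_algebra.
From mathcomp Require Import all_classical all_reals all_analysis.
Set Implicit Arguments. Unset Strict Implicit. Unset Printing Implicit Defensive.
Import Order.TTheory GRing.Theory Num.Theory.
Import numFieldNormedType.Exports.
Local Open Scope classical_set_scope.
Local Open Scope ring_scope.

Section Defs.
Variable R : realType.

Definition I0L (L : R) : set R := `]0, L[.

Definition sqint (L : R) (f : R -> R) : \bar R :=
  (\int[lebesgue_measure]_(x in I0L L) ((f x) ^+ 2)%:E)%E.

Definition L2 (L : R) (f : R -> R) : Prop :=
  measurable_fun (I0L L) f /\ (sqint L f < +oo)%E.

Definition L2conv (L : R) (fs : nat -> R -> R) (f : R -> R) : Prop :=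
  forall e : R, 0 < e -> exists N : nat, forall n : nat, (N <= n)%N ->
    (sqint L (fun x => (fs n x - f x)%R) < e%:E)%E.

Definition smooth (f : R -> R) : Prop :=
  forall (k : nat) (x : R), derivable (derive1n k f) x 1.

Definition test_fun (L : R) (phi : R -> R) : Prop :=
  smooth phi /\ exists a b : R, 0 < a /\ b < L /\
    forall x, (x < a \/ b < x) -> phi x = 0.

Definition weak_deriv (L : R) (u g : R -> R) : Prop :=
  forall phi, test_fun L phi ->
    Rintegral lebesgue_measure (I0L L) (fun x => u x * (derive1 phi) x)
    = - Rintegral lebesgue_measure (I0L L) (fun x => g x * phi x).

Definition H1 (L : R) (u : R -> R) : Prop :=
  L2 L u /\ exists g, L2 L g /\ weak_deriv L u g.

Definition H1conv (L : R) (us : nat -> R -> R) (u : R -> R) : Prop :=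
  exists g, L2 L g /\ weak_deriv L u g /\
    L2conv L us u /\ L2conv L (fun n => (derive1 (us n))) g.

(* C^oo([a,b]): D k is the k-th derivative, continuous up to the boundary,
   with D k' = D (k+1) on the open interval. *)
Definition cinf_cc (a b : R) (f : R -> R) (D : nat -> R -> R) : Prop :=
  (forall x : R, a <= x <= b -> D 0%N x = f x) /\
  (forall k, {within `[a, b], continuous (D k)}) /\
  (forall k (x : R), a < x < b -> is_derive x 1 (D k) (D k.+1 x)).

Definition H1norm_le (L : R) (f : R -> R) (C : R) : Prop :=
  (sqint L f + sqint L ((derive1 f)) <= (C ^+ 2)%:E)%E.

Definition L2norm_le (L : R) (f : R -> R) (C : R) : Prop :=
  (sqint L f <= (C ^+ 2)%:E)%E.

Definition Qcl (L : R) : set (R * R) := [set p | 0 <= p.1 /\ 0 <= p.2 <= L].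

Definition cont_Q (L : R) (F : R -> R -> R) : Prop :=
  {within Qcl L, continuous (fun p : R * R => F p.1 p.2)}.

Definition classical_solution (L : R) (dPhi u0 u1 : R -> R)
  (u : R -> R -> R) : Prop :=
  exists ut ux utt uxx utx uxt : R -> R -> R,
    (cont_Q L u /\ cont_Q L ut /\ cont_Q L ux /\ cont_Q L utt /\
        cont_Q L uxx /\ cont_Q L utx /\ cont_Q L uxt) /\
    (forall t x : R, 0 < t -> 0 < x < L ->
      is_derive t 1 (fun s => u s x) (ut t x) /\
      is_derive x 1 (u t) (ux t x) /\
      is_derive t 1 (fun s => ut s x) (utt t x) /\
      is_derive x 1 (ux t) (uxx t x) /\
      is_derive x 1 (ut t) (utx t x) /\
      is_derive t 1 (fun s => ux s x) (uxt t x) /\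
      utt t x = uxx t x - dPhi (u t x)) /\
    (forall t : R, 0 < t -> ux t 0 = 0 /\ ux t L = 0) /\
    (forall x : R, 0 <= x <= L -> u 0 x = u0 x /\ ut 0 x = u1 x).

End Defs.

(* Main.v *)
Require Import Defs.
From HB Require Import structures.
From mathcomp Require Import all_boot all_order all_algebra.
From mathcomp Require Import all_classical all_reals all_analysis.
From mathcomp Require Import ring lra measurable_realfun.
Import Order.TTheory GRing.Theory Num.Theory.
Import numFieldNormedType.Exports.
Local Open Scope classical_set_scope.
Local Open Scope ring_scope.

Set Implicit Arguments. Unset Strict Implicit. Unset Printing Implicit Defensive.



Lemma contQ_pt (R : realType) (L : R) (F : R -> R -> R) (t x : R) : cont_Q L F ->
  Qcl L (t, x) -> forall e : R, 0 < e -> exists2 d : R, 0 < d &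
  forall s y, Qcl L (s, y) -> `|s - t| < d -> `|y - x| < d -> `|F s y - F t x| < e.
Proof.
move=> cF Qtx e e0.
have := (subspace_continuousP _ _).1 cF (t, x) Qtx.
move/cvgrPdist_lt => /(_ e e0).
rewrite /within /= => /nbhs_ballP [d /= d0 Hd].
exists d => // s y Qsy st yx.
rewrite distrC; apply: (Hd (s, y)) => //.
by split; rewrite /ball /= distrC.
Qed.

Lemma mvt' (R : realType) (f df : R -> R) (a b : R) : a < b ->
  (forall x, a <= x <= b -> is_derive x 1 f (df x)) ->
  exists c, a < c < b /\ f b - f a = df c * (b - a).
Proof.
move=> ab Hd.
have H1 : forall x, x \in `]a, b[ -> is_derive x 1 f (df x).
  move=> x; rewrite in_itv /= => /andP[ax xb]; apply: Hd.
  by rewrite !ltW.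
have H2 : {within `[a, b], continuous f}.
  apply: (@derivable_within_continuous R R^o f `[a, b]) => x.
  rewrite in_itv /= => xab.
  by have := Hd x xab => /@ex_derive.
have [c] := @MVT R f df a b ab H1 H2.
by rewrite in_itv /= => cab E; exists c.
Qed.

Lemma is_deriveB' (R : realType) (f g : R -> R) (x df dg : R) :
  is_derive x 1 f df -> is_derive x 1 g dg ->
  is_derive x 1 (fun y => f y - g y) (df - dg).
Proof. move=> Hf Hg; exact: is_deriveB. Qed.

Lemma schwarz (R : realType) (L : R) (u ut ux utx uxt : R -> R -> R) (t x : R) :
  0 < t -> 0 < x < L ->
  (forall t x : R, 0 < t -> 0 < x < L -> is_derive t 1 (fun s => u s x) (ut t x) /\
     is_derive x 1 (u t) (ux t x) /\ is_derive x 1 (ut t) (utx t x) /\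
     is_derive t 1 (fun s => ux s x) (uxt t x)) ->
  cont_Q L utx -> cont_Q L uxt -> utx t x = uxt t x.
Proof.
move=> t0 /andP[x0 xL] Hd c1 c2.
apply/eqP; rewrite -subr_eq0; apply/negPn/negP => D0.
set D := utx t x - uxt t x in D0.
have e0 : 0 < `|D| / 3 by rewrite divr_gt0 // normr_gt0.
have Qtx : Qcl L (t, x) by rewrite /Qcl /= ltW // ltW // ltW.
have [d1 d10 H1] := contQ_pt c1 Qtx e0.
have [d2 d20 H2] := contQ_pt c2 Qtx e0.
pose h := Num.min (Num.min d1 d2) (L - x) / 2.
have h0 : 0 < h by rewrite divr_gt0 // !lt_min d10 d20 subr_gt0 xL.
have hd1 : h < d1.
  apply: (@lt_le_trans _ _ (Num.min (Num.min d1 d2) (L - x))).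
    by rewrite /h ltr_pdivrMr // ltr_pMr // ?ltr1n // !lt_min d10 d20 subr_gt0 xL.
  by rewrite !ge_min lexx.
have hd2 : h < d2.
  apply: (@lt_le_trans _ _ (Num.min (Num.min d1 d2) (L - x))).
    by rewrite /h ltr_pdivrMr // ltr_pMr // ?ltr1n // !lt_min d10 d20 subr_gt0 xL.
  by rewrite !ge_min lexx orbT.
have hL : x + h < L.
  rewrite -ltrBrDl; apply: (@lt_le_trans _ _ (Num.min (Num.min d1 d2) (L - x))).
    by rewrite /h ltr_pdivrMr // ltr_pMr // ?ltr1n // !lt_min d10 d20 subr_gt0 xL.
  by rewrite ge_min lexx orbT.
have th : t < t + h by rewrite ltrDl.
have th0 : 0 < t + h by rewrite addr_gt0.
have xh : x < x + h by rewrite ltrDl.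
have inT s : t <= s <= t + h -> 0 < s.
  by case/andP => ts _; apply: lt_le_trans ts.
have inX y : x <= y <= x + h -> 0 < y < L.
  case/andP => xy yxh; rewrite (lt_le_trans x0 xy) /=.
  exact: le_lt_trans yxh hL.
have xhX : 0 < x + h < L by apply: inX; rewrite lexx ltW.
have xX : 0 < x < L by rewrite x0 xL.
have [sg [/andP[ts sth] E1]] := @mvt' R (fun s => u s (x + h) - u s x)
   (fun s => ut s (x + h) - ut s x) t (t + h) th
   (fun s hs => is_deriveB' (Hd s (x+h) (inT s hs) xhX).1 (Hd s x (inT s hs) xX).1).
have sg0 : 0 < sg by apply: inT; rewrite !ltW.
have [xi [/andP[xxi xih] E2]] := @mvt' R (ut sg) (utx sg) x (x + h) xh
   (fun y hy => (Hd sg y sg0 (inX y hy)).2.2.1).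
have [xi' [/andP[xxi' xih'] E3]] := @mvt' R (fun y => u (t + h) y - u t y)
   (fun y => ux (t + h) y - ux t y) x (x + h) xh
   (fun y hy => is_deriveB' (Hd (t+h) y th0 (inX y hy)).2.1 (Hd t y t0 (inX y hy)).2.1).
have xi'0 : 0 < xi' < L by apply: inX; rewrite !ltW.
have [sg' [/andP[ts' sth'] E4]] := @mvt' R (fun s => ux s xi') (fun s => uxt s xi') t (t + h) th
   (fun s hs => (Hd s xi' (inT s hs) xi'0).2.2.2).
have Eq : utx sg xi = uxt sg' xi'.
  have : utx sg xi * h * h = uxt sg' xi' * h * h.
    have hh : forall a : R, a + h - a = h by move=> a; rewrite addrAC subrr add0r.
    rewrite !hh in E1 E2 E3 E4.
    by rewrite -E2 -E4 -E1 -E3; ring.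
  by move/(mulIf (lt0r_neq0 h0))/(mulIf (lt0r_neq0 h0)).
have Q1 : Qcl L (sg, xi).
  have := inT sg; rewrite !ltW // => /(_ isT) sg0'.
  rewrite /Qcl /= ltW // (ltW (lt_trans x0 xxi)) /=.
  by split => //; apply: ltW; exact: lt_trans xih hL.
have Q2 : Qcl L (sg', xi').
  have := inT sg'; rewrite !ltW // => /(_ isT) sg0'.
  by case/andP: xi'0 => a b; rewrite /Qcl /= !ltW.
have B1 := H1 sg xi Q1.
have B2 := H2 sg' xi' Q2.
have n1 : `|sg - t| < d1 by rewrite ger0_norm; lra.
have n2 : `|xi - x| < d1 by rewrite ger0_norm; lra.
have n3 : `|sg' - t| < d2 by rewrite ger0_norm; lra.
have n4 : `|xi' - x| < d2 by rewrite ger0_norm; lra.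
have {B1 n1 n2}B1 := B1 n1 n2.
have {B2 n3 n4}B2 := B2 n3 n4.
have HD : `|D| <= `|utx t x - utx sg xi| + `|uxt sg' xi' - uxt t x|.
  have -> : D = (utx t x - utx sg xi) + (uxt sg' xi' - uxt t x) by rewrite /D Eq; ring.
  exact: ler_normD.
rewrite distrC in B1.
have : 0 < `|D| by rewrite normr_gt0.
lra.
Qed.
Lemma contQ_bounded (R : realType) (L T : R) (F : R -> R -> R) : cont_Q L F ->
  exists B : R, forall t x, 0 <= t <= T -> 0 <= x <= L -> `|F t x| <= B.
Proof.
move=> cF.
pose K : set (R * R) := `[0, T] `*` `[0, L].
have cK : compact K by apply: compact_setX; exact: segment_compact.
have KQ : K `<=` Qcl L.
  by move=> [a b]; rewrite /K /Qcl /= !in_itv /= => -[/andP[a0 _] /andP[b0 bL]]; split => //; rewrite b0.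
have cG : {within K, continuous (fun p : R * R => F p.1 p.2)}.
  exact: continuous_subspaceW cF.
have := compact_bounded (continuous_compact cG cK).
move=> [M [_ HM]].
exists (M + 1) => t x tT xL; apply: (HM (M+1)); first by rewrite ltrDl.
exists (t, x) => //; rewrite /K /= !in_itv /=; split => //.
Qed.



Lemma cont_eps (R : realType) (f : R -> R) (y : R) : {for y, continuous f} ->
  forall e : R, 0 < e -> exists2 d : R, 0 < d &
    forall z, `|z - y| < d -> `|f z - f y| < e.
Proof.
move=> cf e e0.
have := (cvgrPdist_lt _ _).1 cf e e0.
move=> /(_ (nbhs_filter y)) /nbhs_ballP [d /= d0 Hd]; exists d => // z zy.
by rewrite distrC; apply: Hd; rewrite /ball /= distrC.
Qed.

Lemma eps_within (R : realType) (A : set R) (f : R -> R) :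
  (forall y, A y -> forall e : R, 0 < e -> exists2 d : R, 0 < d &
    forall z, A z -> `|z - y| < d -> `|f z - f y| < e) ->
  {within A, continuous f}.
Proof.
move=> H; apply/subspace_continuousP => y Ay.
apply/cvgrPdist_lt => e e0.
have [d d0 Hd] := H y Ay e e0.
rewrite /within /=; apply/nbhs_ballP; exists d => //= z yz Az.
by rewrite distrC; apply: Hd => //; rewrite distrC.
Qed.

Lemma eps_cont (R : realType) (f : R -> R) (y : R) :
  (forall e : R, 0 < e -> exists2 d : R, 0 < d &
    forall z, `|z - y| < d -> `|f z - f y| < e) -> {for y, continuous f}.
Proof.
move=> H; apply/cvgrPdist_lt => e e0.
have [d d0 Hd] := H e e0.
apply/nbhs_ballP; exists d => //= z yz.
by rewrite distrC; apply: Hd => //; rewrite distrC.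
Qed.

Lemma slice_x (R : realType) (L : R) (F : R -> R -> R) (s : R) :
  cont_Q L F -> 0 <= s -> {within `[0, L], continuous (F s)}.
Proof.
move=> cF s0; apply: eps_within => y; rewrite /= in_itv /= => yL e e0.
have Q : Qcl L (s, y) by [].
have [d d0 Hd] := contQ_pt cF Q e0.
exists d => // z; rewrite /= in_itv /= => zL zy.
by apply: Hd; rewrite ?subrr ?normr0.
Qed.

Lemma int_I0L (R : realType) (L : R) (f : R -> R) :
  {within `[0, L], continuous f} -> lebesgue_measure.-integrable (I0L L) (EFin \o f).
Proof.
move=> cf.
have H : lebesgue_measure.-integrable `[0, L] (EFin \o f).
  by apply: continuous_compact_integrable => //; exact: segment_compact.
apply: integrableS H.
- exact: measurable_itv.
- exact: measurable_itv.
- exact: subset_itv_oo_cc.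
Qed.

Definition PI (R : realType) (L : R) (F : R -> R -> R) (t : R) : R :=
  Rintegral lebesgue_measure (I0L L) (F t).

Lemma I0L_mem (R : realType) (L y : R) : I0L L y = (0 < y < L).
Proof. by rewrite /I0L /= in_itv. Qed.

Lemma cst_within (R : realType) (A : set R) (c : R) : {within A, continuous (fun _ : R => c)}.
Proof. by apply: continuous_subspaceT => x; exact: cst_continuous. Qed.

Lemma PI_deriv (R : realType) (L : R) (F Ft : R -> R -> R) (t : R) :
  cont_Q L F -> cont_Q L Ft ->
  (forall t x : R, 0 < t -> 0 < x < L -> is_derive t 1 (fun s => F s x) (Ft t x)) ->
  0 < t -> is_derive t 1 (PI L F) (PI L Ft t).
Proof.
move=> cF cFt Hd t0.
have [M HM] := contQ_bounded (t + 1) cFt.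
pose G := fun _ : R => Num.max M 0.
have It : `]t / 2, t + 1[%classic t.
  by rewrite /= in_itv /=; apply/andP; split; lra.
have mB : measurable (I0L L) by exact: measurable_itv.
have intf : forall s, `]t / 2, t + 1[%classic s ->
    lebesgue_measure.-integrable (I0L L) (EFin \o F s).
  move=> s; rewrite /= in_itv /= => /andP[s1 s2].
  by apply/int_I0L/slice_x => //; lra.
have derf1 : forall s y, `]t / 2, t + 1[%classic s -> I0L L y ->
    derivable (F ^~ y) s 1.
  move=> s y; rewrite /= in_itv /= I0L_mem => /andP[s1 s2] yL.
  have := Hd s y _ yL; move=> /(_ ltac:(lra)) H.
  by case: H.
have G0 : forall y, 0 <= G y by move=> y; rewrite /G le_max lexx orbT.
have intG : lebesgue_measure.-integrable (I0L L) (EFin \o G).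
  exact/int_I0L/cst_within.
have dF : forall s y, `]t / 2, t + 1[%classic s -> I0L L y ->
    partial1of2 F s y = Ft s y.
  move=> s y; rewrite /= in_itv /= I0L_mem => /andP[s1 s2] yL.
  have := Hd s y _ yL; move=> /(_ ltac:(lra)) H.
  by rewrite /partial1of2 derive1E derive_val.
have G_ub : forall s y, `]t / 2, t + 1[%classic s -> I0L L y ->
    `|partial1of2 F s y| <= G y.
  move=> s y Is yL; rewrite dF //.
  move: Is yL; rewrite /= in_itv /= I0L_mem => /andP[s1 s2] /andP[y1 y2].
  apply: le_trans (HM _ _ _ _) _; first (apply/andP; split; lra).
    by rewrite !ltW.
  by rewrite le_max lexx.
have Hder := @derivable_under_integral R _ _ (@lebesgue_measure R) F (I0L L) mB t (t/2) (t+1) It intf derf1 G G0 intG G_ub.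
have Hval := @differentiation_under_integral R _ _ (@lebesgue_measure R) F (I0L L) mB t (t/2) (t+1) It intf derf1 G G0 intG G_ub.
apply: DeriveDef; first exact: Hder.
rewrite -derive1E /PI.
rewrite Hval; apply: eq_Rintegral => y yL.
by rewrite dF //; rewrite inE in yL.
Qed.

Lemma max0_lip (R : realType) (a b : R) : `|Num.max a 0 - Num.max b 0| <= `|a - b|.
Proof.
have [a0|a0] := leP a 0; have [b0|b0] := leP b 0.
- by rewrite subrr normr0.
- rewrite sub0r normrN (gtr0_norm b0) distrC ger0_norm; lra.
- rewrite subr0 (gtr0_norm a0) ger0_norm; lra.
- by [].
Qed.

Lemma PI_cont (R : realType) (L : R) (F : R -> R -> R) (T : R) :
  0 <= T -> cont_Q L F -> {within `[0, T], continuous (PI L F)}.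
Proof.
move=> T0 cF.
have [Mb HMb] := contQ_bounded (T + 1) cF.
pose f := fun s y => F (Num.max s 0) y.
pose g := fun _ : R => Num.max Mb 0.
have mB : measurable (I0L L) by exact: measurable_itv.
have int_f : forall s, `]-1, T + 1[%classic s ->
    lebesgue_measure.-integrable (I0L L) (EFin \o f s).
  move=> s _; rewrite /f; apply: int_I0L; apply: (slice_x (F := fun s y => F s y) (s := Num.max s 0)) => //.
  by rewrite le_max lexx orbT.
have cf : {ae lebesgue_measure, forall y, I0L L y ->
    {in `]-1, T + 1[%classic, continuous (f ^~ y)}}.
  apply: aeW => y; rewrite I0L_mem => /andP[y0 yL] s _.
  apply: eps_cont => e e0.
  have Q : Qcl L (Num.max s 0, y).
    by split; [rewrite le_max lexx orbT | rewrite !ltW].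
  have [d d0 Hd] := contQ_pt cF Q e0.
  exists d => // z zs; rewrite /f; apply: Hd.
  - by split; [rewrite le_max lexx orbT | rewrite !ltW].
  - exact: le_lt_trans (max0_lip _ _) zs.
  - by rewrite subrr normr0.
have int_g : lebesgue_measure.-integrable (I0L L) (EFin \o g).
  exact/int_I0L/cst_within.
have g_ub : forall s, `]-1, T + 1[%classic s ->
    {ae lebesgue_measure, forall y, I0L L y -> `|f s y| <= g y}.
  move=> s; rewrite /= in_itv /= => /andP[s1 s2].
  apply: aeW => y; rewrite I0L_mem => /andP[y0 yL].
  apply: le_trans (HMb _ _ _ _) _.
  - apply/andP; split; first by rewrite le_max lexx orbT.
    by rewrite ge_max (ltW s2) /=; lra.
  - by rewrite !ltW.
  - by rewrite /g le_max lexx.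
have Hc := @continuity_under_integral R _ _ (@lebesgue_measure R) f (I0L L) mB (-1) (T + 1) int_f cf g int_g g_ub.
apply: eps_within => y; rewrite /= in_itv /= => /andP[y0 yT] e e0.
have Iy : y \in `]-1, T + 1[%classic.
  by rewrite inE /= in_itv /=; apply/andP; split; lra.
have [d d0 Hd] := cont_eps (Hc y Iy) e0.
exists d => // z; rewrite /= in_itv /= => /andP[z0 zT] zy.
have := Hd z zy.
by rewrite /PI /f (max_l z0) (max_l y0).
Qed.



Lemma ftc (R : realType) (h dh : R -> R) (a b : R) : a < b ->
  {within `[a, b], continuous h} -> {within `[a, b], continuous dh} ->
  (forall x, a < x < b -> is_derive x 1 h (dh x)) ->
  Rintegral lebesgue_measure `]a, b[ dh = h b - h a.
Proof.
move=> ab ch cdh Hd.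
have dF : derivable_oo_LRcontinuous h a b.
  have [_ H1 H2] := (continuous_within_itvP _ ab).1 ch.
  split => //.
  move=> x; rewrite in_itv /= => xab.
  by have [] := Hd x xab.
have F'f : {in `]a, b[, derive1 h =1 dh}.
  move=> x; rewrite in_itv /= => xab.
  by have := Hd x xab => H; rewrite derive1E derive_val.
have := continuous_FTC2 ab cdh dF F'f.
have idh : lebesgue_measure.-integrable `[a, b] (EFin \o dh).
  by apply: continuous_compact_integrable => //; exact: segment_compact.
rewrite /Rintegral.
rewrite -(@integral_itv_bndoo _ a b (EFin \o dh) true false).
  by move=> ->; rewrite -EFinB.
apply: (measurable_int lebesgue_measure).
apply: integrableS idh => //; exact: subset_itv_oo_cc.
Qed.

Lemma Rint_subset (R : realType) (A B : set R) (f : R -> R) :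
  measurable A -> measurable B -> A `<=` B ->
  lebesgue_measure.-integrable B (EFin \o f) -> (forall x, B x -> 0 <= f x) ->
  Rintegral lebesgue_measure A f <= Rintegral lebesgue_measure B f.
Proof.
move=> mA mB AB iB f0.
have iA : lebesgue_measure.-integrable A (EFin \o f) by exact: integrableS iB.
rewrite /Rintegral fine_le //.
- exact: integrable_fin_num.
- exact: integrable_fin_num.
apply: ge0_subset_integral => //.
- by case/integrableP: iB.
Qed.

Lemma cont_Q_add (R : realType) (L : R) (F G : R -> R -> R) :
  cont_Q L F -> cont_Q L G -> cont_Q L (fun t x => F t x + G t x).
Proof. by move=> cF cG p; apply: continuousD; [exact: cF|exact: cG]. Qed.

Lemma cont_Q_sub (R : realType) (L : R) (F G : R -> R -> R) :
  cont_Q L F -> cont_Q L G -> cont_Q L (fun t x => F t x - G t x).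
Proof. by move=> cF cG p; apply: continuousB; [exact: cF|exact: cG]. Qed.

Lemma cont_Q_mul (R : realType) (L : R) (F G : R -> R -> R) :
  cont_Q L F -> cont_Q L G -> cont_Q L (fun t x => F t x * G t x).
Proof. by move=> cF cG p; apply: continuousM; [exact: cF|exact: cG]. Qed.

Lemma cont_Q_comp (R : realType) (L : R) (F : R -> R -> R) (g : R -> R) :
  continuous g -> cont_Q L F -> cont_Q L (fun t x => g (F t x)).
Proof.
move=> cg cF p.
exact: (@continuous_comp _ _ _ (fun p : subspace (Qcl L) => F p.1 p.2) g p (cF p) (cg _)).
Qed.



Lemma is_deriveM' (R : realType) (f g : R -> R) (x df dg : R) :
  is_derive x 1 f df -> is_derive x 1 g dg ->
  is_derive x 1 (fun y => f y * g y) (f x * dg + g x * df).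
Proof. by move=> Hf Hg; have := is_deriveM Hf Hg. Qed.

Lemma is_derive_chain (R : realType) (f g : R -> R) (x df : R) :
  is_derive x 1 f df -> derivable g (f x) 1 ->
  is_derive x 1 (fun y => g (f y)) (derive1 g (f x) * df).
Proof.
move=> Hf Hg.
have df1 : derivable f x 1 by case: Hf.
have dc : derivable (g \o f) x 1.
  apply/derivable1_diffP; apply: differentiable_comp.
  - exact/derivable1_diffP.
  - exact/derivable1_diffP.
apply: DeriveDef; first exact: dc.
rewrite -derive1E.
have -> : (fun y => g (f y)) = (g \o f) by [].
rewrite derive1_comp //; congr (_ * _).
by rewrite derive1E derive_val.
Qed.

Lemma is_derive_eq (R : realType) (f : R -> R) (x d d' : R) :
  is_derive x 1 f d -> d = d' -> is_derive x 1 f d'.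
Proof. by move=> H <-. Qed.

Lemma eps_is_derive (R : realType) (f : R -> R) (x l : R) :
  (forall e : R, 0 < e -> exists2 d : R, 0 < d & forall h, h != 0 -> `|h| < d ->
     `|(f (h + x) - f x) / h - l| <= e) -> is_derive x 1 f l.
Proof.
move=> H.
have cv : (fun h : R => h^-1 *: (f (h *: 1 + x) - f x)) @ 0^' --> l.
  apply/cvgrPdist_le => e e0.
  have [d d0 Hd] := H e e0.
  rewrite /dnbhs /within /=; apply/nbhs_ballP; exists d => //= h.
  rewrite /ball /= sub0r normrN => hd hn0.
  rewrite -[h%:A]/(h * 1) mulr1 -[h^-1 *: _]/(h^-1 * _) distrC mulrC; exact: Hd.
apply: DeriveDef.
  by apply/cvg_ex; exists l.
exact: cvg_lim cv.
Qed.

Lemma mvt_abs (R : realType) (f df : R -> R) (a b : R) :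
  (forall z, `|z - a| <= `|b - a| -> is_derive z 1 f (df z)) ->
  exists c, `|c - a| <= `|b - a| /\ f b - f a = df c * (b - a).
Proof.
move=> Hd.
have [ab|ba|<-] := ltgtP a b.
- have [c [/andP[ac cb] E]] := @mvt' R f df a b ab
    (fun z hz => Hd z ltac:(case/andP: hz => h1 h2; rewrite !ger0_norm; lra)).
  by exists c; split => //; rewrite !ger0_norm; lra.
- have [c [/andP[bc ca] E]] := @mvt' R f df b a ba
    (fun z hz => Hd z ltac:(case/andP: hz => h1 h2; rewrite !ler0_norm; lra)).
  exists c; split; first by rewrite !ler0_norm; lra.
  by rewrite -opprB E; ring.
- by exists a; split; rewrite !subrr ?mulr0.
Qed.

Lemma init_deriv (R : realType) (L : R) (u ux : R -> R -> R) (x : R) :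
  cont_Q L u -> cont_Q L ux ->
  (forall t y : R, 0 < t -> 0 < y < L -> is_derive y 1 (u t) (ux t y)) ->
  0 < x < L -> is_derive x 1 (u 0) (ux 0 x).
Proof.
move=> cu cux Hd /andP[x0 xL].
apply: eps_is_derive => e e0.
have Qx : Qcl L (0, x) by rewrite /Qcl /= lexx !ltW.
have [d d0 Hdx] := contQ_pt cux Qx e0.
pose d' := Num.min d (Num.min x (L - x)).
have d'0 : 0 < d' by rewrite !lt_min d0 x0 subr_gt0 xL.
have d'd : d' <= d by rewrite ge_min lexx.
have d'x : d' <= x by rewrite !ge_min lexx orbT.
have d'L : d' <= L - x by rewrite !ge_min lexx !orbT.
exists d' => // h hn0 hd.
have hpos : 0 < `|h| by rewrite normr_gt0.
set y := h + x.
have yL : 0 < y < L.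
  have := ler_norml h d'; move: hd; rewrite ltr_norml => /andP[h1 h2] _.
  apply/andP; split; rewrite /y; lra.
have Qy : Qcl L (0, y) by case/andP: yL => ? ?; rewrite /Qcl /= lexx !ltW.
suff : `|u 0 y - u 0 x - h * ux 0 x| <= e * `|h|.
  move=> H.
  have -> : (u 0 y - u 0 x) / h - ux 0 x = (u 0 y - u 0 x - h * ux 0 x) / h.
    by field.
  by rewrite normf_div ler_pdivrMr.
apply/ler_addgt0Pr => eta eta0.
have eta20 : 0 < eta / 2 by rewrite divr_gt0.
have [d1 d10 H1] := contQ_pt cu Qy eta20.
have [d2 d20 H2] := contQ_pt cu Qx eta20.
pose s := Num.min d (Num.min d1 d2) / 2.
have s0 : 0 < s by rewrite divr_gt0 // !lt_min d0 d10 d20.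
have sm : s < Num.min d (Num.min d1 d2).
  by rewrite /s ltr_pdivrMr // ltr_pMr // ?ltr1n // !lt_min d0 d10 d20.
have sd : s < d by move: sm; rewrite !lt_min => /and3P[].
have sd1 : s < d1 by move: sm; rewrite !lt_min => /and3P[].
have sd2 : s < d2 by move: sm; rewrite !lt_min => /and3P[].
have ns : forall q, q < d -> q < d1 -> q < d2 -> True by [].
have Hs0 : `|s - 0| = s by rewrite subr0 gtr0_norm.
have hdom : forall z, `|z - x| <= `|y - x| -> 0 < z < L.
  move=> z hz.
  have hz' : `|z - x| < d' by apply: le_lt_trans hz _; rewrite /y addrK.
  move: hz'; rewrite ltr_norml => /andP[z1 z2]; apply/andP; split; lra.
have [c [cx E]] := @mvt_abs R (u s) (ux s) x y
  (fun z hz => Hd s z s0 (hdom z hz)).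
have cxd : `|c - x| < d by apply: le_lt_trans cx _; rewrite /y addrK; exact: lt_le_trans hd d'd.
have Qc : Qcl L (s, c).
  have : `|c - x| < d' by apply: le_lt_trans cx _; rewrite /y addrK.
  rewrite ltr_norml => /andP[c1 c2]; rewrite /Qcl /=; split; [exact: ltW|apply/andP; split; lra].
have Qs : forall z, 0 < z < L -> Qcl L (s, z).
  by move=> z /andP[z1 z2]; rewrite /Qcl /= !ltW.
have B1 := H1 s y (Qs y yL) ltac:(rewrite Hs0 //) ltac:(rewrite subrr normr0 //).
have B2 := H2 s x (Qs x ltac:(by rewrite x0 xL)) ltac:(rewrite Hs0 //) ltac:(rewrite subrr normr0 //).
have B3 := Hdx s c Qc ltac:(rewrite Hs0 //) cxd.
rewrite /y addrK in E.
have B4 : `|u s y - u s x - h * ux 0 x| <= e * `|h|.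
  rewrite E.
  have -> : ux s c * h - h * ux 0 x = (ux s c - ux 0 x) * h by ring.
  by rewrite normrM ler_pM2r // ltW.
have -> : u 0 y - u 0 x - h * ux 0 x =
   (u 0 y - u s y) + (u s x - u 0 x) + (u s y - u s x - h * ux 0 x) by ring.
apply: le_trans (ler_normD _ _) _.
apply: le_trans (lerD (ler_normD _ _) (lexx _)) _.
rewrite distrC in B1.
have : `|u s x - u 0 x| < eta / 2 by [].
lra.
Qed.



Lemma within_mul (R : realType) (A : set R) (f g : R -> R) :
  {within A, continuous f} -> {within A, continuous g} ->
  {within A, continuous (fun x => f x * g x)}.
Proof. by move=> cf cg p; apply: continuousM; [exact: cf|exact: cg]. Qed.

Lemma sqint_R (R : realType) (L : R) (f g : R -> R) :
  {within `[0, L], continuous g} -> (forall x, 0 < x < L -> f x = g x) ->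
  sqint L f = (Rintegral lebesgue_measure (I0L L) (fun x => g x * g x))%:E.
Proof.
move=> cg fg.
have ig : lebesgue_measure.-integrable (I0L L) (EFin \o (fun x => g x * g x)).
  apply: int_I0L.
  exact: within_mul.
rewrite /sqint /Rintegral fineK; last by apply: integrable_fin_num => //; exact: measurable_itv.
apply: eq_integral => x; rewrite inE /= I0L_mem => xL.
by rewrite fg // expr2.
Qed.

Lemma int_slice (R : realType) (L : R) (F : R -> R -> R) (s : R) :
  cont_Q L F -> 0 <= s -> lebesgue_measure.-integrable (I0L L) (EFin \o F s).
Proof. by move=> cF s0; apply: int_I0L; exact: slice_x. Qed.

Lemma Rint_cst_I0L (R : realType) (L c : R) : 0 < L ->
  Rintegral lebesgue_measure (I0L L) (fun _ => c) = c * L.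
Proof.
move=> L0; rewrite Rintegral_cst; last exact: measurable_itv.
have := @lebesgue_measure_itv R `]0, L[; rewrite /= lte_fin L0 /I0L => ->.
by rewrite /= oppr0 addr0.
Qed.

Lemma int_sub (R : realType) (L a b : R) (f : R -> R) :
  {within `[0, L], continuous f} -> 0 <= a -> b <= L ->
  lebesgue_measure.-integrable `]a, b[ (EFin \o f).
Proof.
move=> cf a0 bL.
have H : lebesgue_measure.-integrable `[a, b] (EFin \o f).
  apply: continuous_compact_integrable; first exact: segment_compact.
  apply: continuous_subspaceW cf.
  by move=> z; rewrite /= !in_itv /= => /andP[z1 z2]; rewrite (le_trans a0 z1) (le_trans z2 bL).
apply: integrableS H.
- exact: measurable_itv.
- exact: measurable_itv.
- exact: subset_itv_oo_cc.
Qed.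

Lemma abs_le_sq (R : realType) (a : R) : `|a| <= 1 + a * a.
Proof.
have -> : a * a = `|a| * `|a| by rewrite -normrM ger0_norm // -expr2 sqr_ge0.
have := normr_ge0 a; nra.
Qed.

Lemma RintD (R : realType) (L : R) (f g : R -> R) :
  lebesgue_measure.-integrable (I0L L) (EFin \o f) ->
  lebesgue_measure.-integrable (I0L L) (EFin \o g) ->
  Rintegral lebesgue_measure (I0L L) (fun x => f x + g x) =
  Rintegral lebesgue_measure (I0L L) f + Rintegral lebesgue_measure (I0L L) g.
Proof. by move=> i1 i2; apply: RintegralD => //; exact: measurable_itv. Qed.

Lemma Rle (R : realType) (A : set R) (f g : R -> R) : measurable A ->
  lebesgue_measure.-integrable A (EFin \o f) ->
  lebesgue_measure.-integrable A (EFin \o g) ->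
  (forall x, A x -> f x <= g x) ->
  Rintegral lebesgue_measure A f <= Rintegral lebesgue_measure A g.
Proof. by move=> mA i1 i2 H; apply: le_Rintegral. Qed.

Lemma Rnorm (R : realType) (A : set R) (f : R -> R) : measurable A ->
  lebesgue_measure.-integrable A (EFin \o f) ->
  `|Rintegral lebesgue_measure A f| <= Rintegral lebesgue_measure A (fun x => `|f x|).
Proof. by move=> mA i1; apply: le_normr_Rintegral. Qed.

Lemma int_norm (R : realType) (A : set R) (f : R -> R) : measurable A ->
  lebesgue_measure.-integrable A (EFin \o f) ->
  lebesgue_measure.-integrable A (EFin \o (fun x => `|f x|)).
Proof.
move=> mA i1.
have -> : EFin \o (fun x => `|f x|) = abse \o (EFin \o f) by apply/funext => x.
exact: integrable_abse.
Qed.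

Lemma RintB (R : realType) (L : R) (f g : R -> R) :
  lebesgue_measure.-integrable (I0L L) (EFin \o f) ->
  lebesgue_measure.-integrable (I0L L) (EFin \o g) ->
  Rintegral lebesgue_measure (I0L L) (fun x => f x - g x) =
  Rintegral lebesgue_measure (I0L L) f - Rintegral lebesgue_measure (I0L L) g.
Proof. by move=> i1 i2; apply: RintegralB => //; exact: measurable_itv. Qed.



Lemma is_deriveD' (R : realType) (f g : R -> R) (x df dg : R) :
  is_derive x 1 f df -> is_derive x 1 g dg ->
  is_derive x 1 (fun y => f y + g y) (df + dg).
Proof. move=> Hf Hg; exact: is_deriveD. Qed.

Lemma der_cont (R : realType) (f : R -> R) : (forall x, derivable f x 1) -> continuous f.
Proof.
move=> H x; apply/differentiable_continuous; exact/derivable1_diffP.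
Qed.

Definition Qb (R : realType) (L C : R) := L + 2 * C ^+ 2 + 2 * C * L.
Definition Mf (R : realType) (L C t : R) := (L + C ^+ 2 + t * Qb L C + L * Qb L C) / L.

Lemma main_n (R : realType) (L C : R) (P : R -> R) (u0 u1 : R -> R) (u : R -> R -> R) :
  0 < L -> 0 < C -> smooth P -> (forall x, 0 <= P x <= C) ->
  H1norm_le L u0 C -> L2norm_le L u1 C ->
  classical_solution L (derive1 P) u0 u1 u ->
  forall t x : R, 0 < t -> 0 < x < L -> `|u t x| <= Mf L C t.
Proof.
move=> L0 C0 Psm Pb H0 H1 [ut [ux [utt [uxx [utx [uxt
  [[cu [cut [cux [cutt [cuxx [cutx cuxt]]]]]] [Hd [BC IC]]]]]]]]].
have dP0 : forall x, derivable P x 1 by move=> x; exact: (Psm 0%N x).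
have dP1 : forall x, derivable (derive1 P) x 1 by move=> x; exact: (Psm 1%N x).
have cP := der_cont dP0.
have cdP := der_cont dP1.
set dP := derive1 P in Hd cdP dP1.
have sw : forall t x : R, 0 < t -> 0 < x < L -> utx t x = uxt t x.
  move=> t x t0 xL; apply: (@schwarz R L u ut ux utx uxt t x t0 xL) => //.
  move=> s y s0 yL; have [h1 [h2 [_ [_ [h5 [h6 _]]]]]] := Hd s y s0 yL.
  by split; [|split; [|split]].
pose e := fun t x => ut t x * ut t x + ux t x * ux t x + (P (u t x) + P (u t x)).
pose et := fun t x => (ut t x * utt t x + ut t x * utt t x) + (ux t x * uxt t x + ux t x * uxt t x)
   + (dP (u t x) * ut t x + dP (u t x) * ut t x).
have ce : cont_Q L e.
  apply: cont_Q_add; [apply: cont_Q_add; exact: cont_Q_mul|].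
  by apply: cont_Q_add; exact: cont_Q_comp.
have cet : cont_Q L et.
  apply: cont_Q_add; [apply: cont_Q_add; apply: cont_Q_add; exact: cont_Q_mul|].
  by apply: cont_Q_add; apply: cont_Q_mul => //; exact: cont_Q_comp.
have de : forall t x : R, 0 < t -> 0 < x < L -> is_derive t 1 (fun s => e s x) (et t x).
  move=> t x t0 xL; have [h1 [h2 [h3 [h4 [h5 [h6 h7]]]]]] := Hd t x t0 xL.
  have A := is_deriveM' h3 h3.
  have B := is_deriveM' h6 h6.
  have Cc := is_derive_chain h1 (dP0 (u t x)).
  have := is_deriveD' (is_deriveD' A B) (is_deriveD' Cc Cc).
  move/is_derive_eq; apply; rewrite /et /dP; ring.
have mI : measurable (I0L L) by exact: measurable_itv.
have Et0 : forall t, 0 < t -> PI L et t = 0.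
  move=> t t0.
  pose h := fun y => ut t y * ux t y.
  pose dh := fun y => ut t y * uxx t y + ux t y * utx t y.
  have cdh : {within `[0, L], continuous dh}.
    apply: (slice_x (F := fun t y => ut t y * uxx t y + ux t y * utx t y)); last exact: ltW.
    by apply: cont_Q_add; exact: cont_Q_mul.
  have ch : {within `[0, L], continuous h}.
    apply: (slice_x (F := fun t y => ut t y * ux t y)); last exact: ltW.
    exact: cont_Q_mul.
  have eq : {in I0L L, et t =1 (fun y => 2 * dh y)}.
    move=> y; rewrite inE /= I0L_mem => yL.
    have [_ [_ [_ [_ [_ [_ h7]]]]]] := Hd t y t0 yL.
    rewrite /et /dh h7 -(sw t y t0 yL); ring.
  rewrite /PI (@eq_Rintegral _ _ _ (@lebesgue_measure R) (I0L L) _ _ eq) RintegralZl //; last exact: int_I0L.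
  have dd : forall y, 0 < y < L -> is_derive y 1 h (dh y).
    move=> y yL; have [_ [_ [_ [h4 [h5 _]]]]] := Hd t y t0 yL.
    exact: is_deriveM' h5 h4.
  have E := @ftc R h dh 0 L L0 ch cdh dd.
  transitivity (2 * (h L - h 0)); first by congr (_ * _); exact: E.
  by rewrite /h (BC t t0).1 (BC t t0).2 !mulr0 subrr mulr0.
have Econst : forall t, 0 < t -> PI L e t = PI L e 0.
  move=> t t0.
  have dd : forall y, y \in `]0, t[ -> is_derive y 1 (PI L e) (PI L et y).
    move=> y; rewrite in_itv /= => /andP[y0 yt].
    exact: PI_deriv ce cet de y0.
  have [c] := @MVT R (PI L e) (PI L et) 0 t t0 dd (PI_cont (ltW t0) ce).
  rewrite in_itv /= => /andP[c0 ct] E.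
  by apply/eqP; rewrite -subr_eq0 E Et0 // mul0r.
have hu0 : forall x, 0 < x < L -> u0 x = u 0 x.
  by move=> x /andP[x0 xL]; rewrite (IC x _).1 // !ltW.
have hu1 : forall x, 0 < x < L -> u1 x = ut 0 x.
  by move=> x /andP[x0 xL]; rewrite (IC x _).2 // !ltW.
have hdu0 : forall x, 0 < x < L -> derive1 u0 x = ux 0 x.
  move=> x xL.
  have Hx := init_deriv cu cux (fun s y s0 yL => (Hd s y s0 yL).2.1) xL.
  have ne : \near x, u 0 x = u0 x.
    case/andP: xL => x0 xL.
    apply/nbhs_ballP; exists (Num.min x (L - x)) => /=.
      by rewrite lt_min x0 subr_gt0 xL.
    move=> z; rewrite /ball /= lt_min => /andP[z1 z2].
    rewrite hu0 //; move: z1 z2; rewrite !ltr_norml => /andP[a1 a2] /andP[b1 b2].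
    apply/andP; split; lra.
  have := near_eq_is_derive ne Hx => H.
  by rewrite derive1E derive_val.
have I1 : Rintegral lebesgue_measure (I0L L) (fun x => ut 0 x * ut 0 x) <= C ^+ 2.
  move: H1; rewrite /L2norm_le (sqint_R (g := ut 0)) ?lee_fin //.
  exact: slice_x.
have I2 : Rintegral lebesgue_measure (I0L L) (fun x => u 0 x * u 0 x) +
          Rintegral lebesgue_measure (I0L L) (fun x => ux 0 x * ux 0 x) <= C ^+ 2.
  move: H0; rewrite /H1norm_le (sqint_R (g := u 0)) ?(sqint_R (g := ux 0)) ?lee_fin //.
  - exact: slice_x.
  - exact: slice_x.
have iF : forall F : R -> R -> R, cont_Q L F -> forall s, 0 <= s ->
    lebesgue_measure.-integrable (I0L L) (EFin \o F s).
  by move=> F cF s s0; exact: int_slice.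
have c1 : cont_Q L (fun _ _ => 1).
  by move=> p; exact: cst_continuous.
have ie : forall s, 0 <= s -> lebesgue_measure.-integrable (I0L L) (EFin \o e s).
  by move=> s s0; exact: iF ce s s0.
have E0b : PI L e 0 <= 2 * C ^+ 2 + 2 * C * L.
  have i1 := iF _ (cont_Q_mul cut cut) 0 (lexx 0).
  have i2 := iF _ (cont_Q_mul cux cux) 0 (lexx 0).
  have i3 := iF _ (cont_Q_add (cont_Q_comp cP cu) (cont_Q_comp cP cu)) 0 (lexx 0).
  have i12 := iF _ (cont_Q_add (cont_Q_mul cut cut) (cont_Q_mul cux cux)) 0 (lexx 0).
  rewrite /PI /e.
  rewrite (RintD i12 i3) (RintD i1 i2).
  have h3 : Rintegral lebesgue_measure (I0L L) (fun x => P (u 0 x) + P (u 0 x)) <= (C + C) * L.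
    rewrite -Rint_cst_I0L //; apply: Rle; [exact: mI|exact: i3|apply: int_I0L; exact: cst_within|].
    move=> x _; have := Pb (u 0 x); case/andP => _ pc; lra.
  have h0 : 0 <= Rintegral lebesgue_measure (I0L L) (fun x => u 0 x * u 0 x).
    by apply: Rintegral_ge0 => x _; rewrite -expr2 sqr_ge0.
  move: h3 h0 I1 I2; clear; lra.
have Qb_ge : forall s, 0 <= s -> Rintegral lebesgue_measure (I0L L) (fun x => 1 + e s x) <= Qb L C.
  move=> s s0.
  rewrite (RintD (iF _ c1 s s0) (ie s s0)) Rint_cst_I0L // mul1r.
  have Es : PI L e s = PI L e 0.
    have [->|s0'] := eqVneq s 0; first by [].
    by apply: Econst; rewrite lt_def s0' s0.
  move: Es; rewrite /PI => ->; rewrite /Qb; move: E0b; rewrite /PI; clear; lra.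
have eg : forall s x, ut s x * ut s x + ux s x * ux s x <= e s x.
  move=> s x; rewrite /e; have := Pb (u s x); case/andP => p0 _; clear -p0; lra.
have ut_le : forall s x, `|ut s x| <= 1 + e s x.
  move=> s x; apply: le_trans (abs_le_sq _) _; have := eg s x.
  have := sqr_ge0 (ux s x); rewrite expr2; lra.
have ux_le : forall s x, `|ux s x| <= 1 + e s x.
  move=> s x; apply: le_trans (abs_le_sq _) _; have := eg s x.
  have := sqr_ge0 (ut s x); rewrite expr2; lra.
have c1e : cont_Q L (fun s y => 1 + e s y) by exact: cont_Q_add.
have e_ge0 : forall s y, 0 <= e s y.
  move=> s y; apply: le_trans (eg s y); rewrite -!expr2; apply: addr_ge0; exact: sqr_ge0.
have Gb : forall t, 0 < t -> `|PI L u t| <= L + C ^+ 2 + t * Qb L C.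
  move=> t t0.
  have dd : forall y, y \in `]0, t[ -> is_derive y 1 (PI L u) (PI L ut y).
    move=> y; rewrite in_itv /= => /andP[y0 yt].
    exact: PI_deriv cu cut (fun s y s0 yL => (Hd s y s0 yL).1) y0.
  have [c] := @MVT R (PI L u) (PI L ut) 0 t t0 dd (PI_cont (ltW t0) cu).
  rewrite in_itv /= => /andP[c0 ct] E.
  have b1 : `|PI L ut c| <= Qb L C.
    apply: le_trans (Rnorm mI (iF _ cut c (ltW c0))) _.
    apply: le_trans _ (Qb_ge c (ltW c0)).
    apply: Rle => //.
    - exact: int_norm (iF _ cut c (ltW c0)).
    - exact: iF c1e c (ltW c0).
  have b0 : `|PI L u 0| <= L + C ^+ 2.
    apply: le_trans (Rnorm mI (iF _ cu 0 (lexx 0))) _.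
    have i0 := iF _ (cont_Q_mul cu cu) 0 (lexx 0).
    apply: (@le_trans _ _ (Rintegral lebesgue_measure (I0L L) (fun x => 1 + u 0 x * u 0 x))).
      apply: Rle => //.
      - exact: int_norm (iF _ cu 0 (lexx 0)).
      - exact: (iF _ (cont_Q_add c1 (cont_Q_mul cu cu)) 0 (lexx 0)).
      - by move=> x _; exact: abs_le_sq.
    rewrite (RintD (iF _ c1 0 (lexx 0)) i0) Rint_cst_I0L // mul1r.
    have : 0 <= Rintegral lebesgue_measure (I0L L) (fun x => ux 0 x * ux 0 x).
      by apply: Rintegral_ge0 => x _; rewrite -expr2 sqr_ge0.
    move: I2; clear; lra.
  have -> : PI L u t = PI L u 0 + PI L ut c * t by rewrite subr0 in E; rewrite -E; ring.
  apply: le_trans (ler_normD _ _) _.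
  rewrite normrM (gtr0_norm t0).
  have := ler_wpM2r (ltW t0) b1.
  move: b0; clear; lra.
have Dxb : forall t a b, 0 < t -> 0 < a -> a < b -> b < L -> `|u t b - u t a| <= Qb L C.
  move=> t a b t0 a0 ab bL.
  have cu' : {within `[a, b], continuous (u t)}.
    apply: continuous_subspaceW (slice_x cu (ltW t0)).
    by move=> z; rewrite /= !in_itv /= => /andP[z1 z2]; rewrite (ltW (lt_le_trans a0 z1)) (ltW (le_lt_trans z2 bL)).
  have cux' : {within `[a, b], continuous (ux t)}.
    apply: continuous_subspaceW (slice_x cux (ltW t0)).
    by move=> z; rewrite /= !in_itv /= => /andP[z1 z2]; rewrite (ltW (lt_le_trans a0 z1)) (ltW (le_lt_trans z2 bL)).
  have dd : forall y, a < y < b -> is_derive y 1 (u t) (ux t y).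
    move=> y /andP[y1 y2]; apply: (Hd t y t0 _).2.1.
    by rewrite (lt_trans a0 y1) (lt_trans y2 bL).
  rewrite -(ftc ab cu' cux' dd).
  have mab : measurable `]a, b[%classic by exact: measurable_itv.
  have iux := int_sub (slice_x cux (ltW t0)) (ltW a0) (ltW bL).
  have i1e := int_sub (slice_x c1e (ltW t0)) (ltW a0) (ltW bL).
  apply: le_trans (Rnorm mab iux) _.
  apply: (@le_trans _ _ (Rintegral lebesgue_measure `]a, b[ (fun y => 1 + e t y))).
    apply: Rle; [exact: measurable_itv|exact: int_norm|exact: i1e|by move=> y _; exact: ux_le].
  apply: (@le_trans _ _ (Rintegral lebesgue_measure (I0L L) (fun y => 1 + e t y))); last first.
    exact: Qb_ge (ltW t0).
  apply: (@Rint_subset R `]a, b[ (I0L L) (fun y => 1 + e t y)).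
  - exact: measurable_itv.
  - exact: measurable_itv.
  - move=> z; rewrite /= !in_itv /= => /andP[z1 z2].
    by rewrite I0L_mem (lt_trans a0 z1) (lt_trans z2 bL).
  - exact: iF c1e t (ltW t0).
  - move=> z _; have := e_ge0 t z; clear; lra.
move=> t x t0 /andP[x0 xL].
have Qb0 : 0 < Qb L C.
  rewrite /Qb; have h1 : 0 < C ^+ 2 by rewrite exprn_gt0.
  have h2 : 0 < C * L by rewrite mulr_gt0.
  move: h1 h2 L0; clear; lra.
have pw : forall y, I0L L y -> `|u t x - u t y| <= Qb L C.
  move=> y; rewrite I0L_mem => /andP[y0 yL]; have [xy|yx|<-] := ltgtP x y.
  - by rewrite distrC; exact: Dxb t x y t0 x0 xy yL.
  - exact: Dxb t y x t0 y0 yx xL.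
  - by rewrite subrr normr0 ltW.
have cc : cont_Q L (fun _ _ => u t x) by move=> p; exact: cst_continuous.
have iu := iF _ cu t (ltW t0).
have ic := iF _ cc t (ltW t0).
have id := iF _ (cont_Q_sub cc cu) t (ltW t0).
have E1 : Rintegral lebesgue_measure (I0L L) (fun y => u t x - u t y) = u t x * L - PI L u t.
  by rewrite (RintB ic iu) Rint_cst_I0L.
have B : `|u t x * L - PI L u t| <= Qb L C * L.
  rewrite -E1 -Rint_cst_I0L //.
  apply: le_trans (Rnorm mI id) _.
  apply: Rle; [exact: mI|exact: int_norm|apply: int_I0L; exact: cst_within|].
  move=> y yL; exact: pw.
have G := Gb t t0.
rewrite /Mf ler_pdivlMr //.
have -> : `|u t x| * L = `|u t x * L| by rewrite normrM (gtr0_norm L0).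
have T := ler_normD (u t x * L - PI L u t) (PI L u t).
rewrite subrK in T.
move: T B G; clear; lra.
Qed.

Unset Implicit Arguments.
Set Strict Implicit.

Theorem lemma3p5 (R : realType) (L : R) (Phi : R -> R) (u0 u1 : R -> R)
  (u0s u1s Phis : nat -> R -> R) (C : R) (us : nat -> R -> R -> R) :
  0 < L ->
  (* hypotheses on Phi *)
  continuous Phi ->
  (forall x, x != 1 -> x != -1 -> derivable Phi x 1 /\ {for x, continuous (derive1 Phi)}) ->
  (exists c, forall x, x <= -1 -> Phi x = c) ->
  (exists c, forall x, 1 <= x -> Phi x = c) ->
  (forall x y t, -1 <= x <= 1 -> -1 <= y <= 1 -> 0 <= t <= 1 ->
     Phi (t * x + (1 - t) * y) <= t * Phi x + (1 - t) * Phi y) ->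
  (forall x y, -1 <= x -> x <= y -> y <= 0 -> Phi y <= Phi x) ->
  (forall x y, 0 <= x -> x <= y -> y <= 1 -> Phi x <= Phi y) ->
  (* data *)
  H1 L u0 -> L2 L u1 ->
  (forall n, exists D, cinf_cc 0 L (u0s n) D /\ D 1%N 0 = 0 /\ D 1%N L = 0) ->
  (forall n, exists D, cinf_cc 0 L (u1s n) D) ->
  (forall n, u1s n 0 = 0 /\ u1s n L = 0) ->
  (forall n, smooth (Phis n)) ->
  (* convergences *)
  H1conv L u0s u0 ->
  L2conv L u1s u1 ->
  (forall e : R, 0 < e -> exists N : nat, forall n x, (N <= n)%N ->
     `|Phis n x - Phi x| < e) ->
  (forall x, x != 1 -> x != -1 ->
     (fun n => (derive1 (Phis n)) x) @ \oo --> (derive1 Phi) x) ->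
  (forall eps : R, 0 < eps -> forall e : R, 0 < e ->
     exists N : nat, forall n x, (N <= n)%N -> eps <= `|x - 1| -> eps <= `|x + 1| ->
     `|(derive1 (Phis n)) x - (derive1 Phi) x| < e) ->
  (forall eps : R, 0 < eps -> forall n x, 1 + eps <= `|x| -> (derive1 (Phis n)) x = 0) ->
  (* uniform bounds *)
  0 < C ->
  (forall n, H1norm_le L (u0s n) C) ->
  (forall n, L2norm_le L (u1s n) C) ->
  (forall n x, 0 <= Phis n x <= C) ->
  (forall n x, `|(derive1 (Phis n)) x| <= C) ->
  (* u_n classical solutions *)
  (forall n, classical_solution L ((derive1 (Phis n))) (u0s n) (u1s n) (us n)) ->
  (* conclusion: {u_n} bounded in L^oo((0,T) x (0,L)) for every T > 0 *)
  forall T : R, 0 < T ->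
    exists M : R, forall n t x, 0 < t < T -> 0 < x < L -> `|us n t x| <= M.

Proof.
move=> L0 _ _ _ _ _ _ _ _ _ _ _ _ Psm _ _ _ _ _ _ C0 H0n H1n Pb _ Hsol T T0.
exists (Mf L C T) => n t x /andP[t0 tT] xL.
apply: le_trans (main_n L0 C0 (Psm n) (Pb n) (H0n n) (H1n n) (Hsol n) t0 xL) _.
rewrite /Mf ler_pdivrMr // divfK ?lt0r_neq0 //.
have Qb0 : 0 < Qb L C.
  rewrite /Qb; have h1 : 0 < C ^+ 2 by rewrite exprn_gt0.
  have h2 : 0 < C * L by rewrite mulr_gt0.
  move: h1 h2 L0; clear; lra.
rewrite lerD2r lerD2l ler_pM2r //; exact: ltW.
Qed.
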